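(* Fix $a\ge0$, $b>0$ and $N\ge2$. Then for all $M$ large enough, $$P_o(\xi_t\ne\mathbf 0\ \forall t>0)\le\begin{cases}M^{-1/3}\big(1/2+bN(1-a/4)^{-1}\big)&\text{if }a<4,\\ M^{-1/3}\big(1/2+(b/2)(N+2)^2\big)&\text{if }a=4,\\ M^{-1/3}\big(1/2+b(a/4-1)^{-2}(a/4)^{N+2}\big)&\text{if }a>4.\end{cases}$$
   Context: For $x,y\in\mathbb Z$ write $y\sim x$ iff $0<|x-y|\le M$. The $N$-patch model (patch size $N\ge2$, inner birth rate $a$, outer birth rate $b$, dispersal range $M$) is the continuous-time Markov process $\xi_t\in\{0,1,\dots,N\}^{\mathbb Z}$ with transitions: $\xi(x)\to\xi(x)-1$ at rate $\xi(x)$, and $\xi(x)\to\xi(x)+1$ at rate $$\frac{a}{N(N-1)}\xi(x)(\xi(x)-1)(N-\xi(x))+\sum_{y\sim x}\frac{b}{2M\,N(N-1)}\xi(y)(\xi(y)-1)(N-\xi(x)).$$ $\mathbf 0$ is the all-empty configuration, and $P_o$ is the law of the process started from $\xi_0(0)=N$, $\xi_0(x)=0$ for $x\neq0$. *)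

(* Defs.v *)
From Stdlib Require Import Reals ZArith List.
Import ListNotations.
Open Scope R_scope.

(* Configurations of the N-patch model: xi : Z -> nat (values in {0..N}). *)
Definition config := Z -> nat.

(* The all-empty configuration is represented implicitly by [is_zero]. *)

Definition rsum {A : Type} (f : A -> R) (l : list A) : R :=
  fold_right Rplus 0 (map f l).

Definition window (W : nat) : list Z :=
  map (fun i => (Z.of_nat i - Z.of_nat W)%Z) (seq 0 (2 * W + 1)).

Definition upd (xi : config) (x : Z) (d : nat) : config :=
  fun y => if Z.eq_dec y x then d else xi y.

(* birth rate at site x:
   a/(N(N-1)) xi(x)(xi(x)-1)(N-xi(x))
   + sum_{y ~ x} b/(2M N(N-1)) xi(y)(xi(y)-1)(N-xi(x)),
   where y ~ x iff 0 < |x-y| <= M. *)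
Definition birth_rate (a b : R) (N M : nat) (xi : config) (x : Z) : R :=
  a / (INR N * (INR N - 1))
    * INR (xi x * (xi x - 1) * (N - xi x))%nat
  + rsum (fun k : nat =>
        b / (2 * INR M * INR N * (INR N - 1))
          * (INR (xi (x + Z.of_nat k)%Z * (xi (x + Z.of_nat k)%Z - 1) * (N - xi x))%nat
             + INR (xi (x - Z.of_nat k)%Z * (xi (x - Z.of_nat k)%Z - 1) * (N - xi x))%nat))
      (seq 1 M).

Definition death_rate (xi : config) (x : Z) : R := INR (xi x).

(* xi vanishes on the window [-L, L] (used with the invariant that the
   support of xi lies in [-L, L]) *)
Definition is_zero (L : nat) (xi : config) : bool :=
  forallb (fun x => Nat.eqb (xi x) 0) (window L).

(* hit_prob a b N M n L xi = probability that the embedded jump chain of the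
   N-patch model started from xi (support in [-L,L]) hits the all-empty
   configuration 0 within n jumps.  0 is absorbing. *)
Fixpoint hit_prob (a b : R) (N M : nat) (n : nat) (L : nat) (xi : config) : R :=
  if is_zero L xi then 1 else
  match n with
  | O => 0
  | S n' =>
      let W := (L + M)%nat in
      let q := rsum (fun x => death_rate xi x + birth_rate a b N M xi x) (window W) in
      rsum (fun x =>
              death_rate xi x / q * hit_prob a b N M n' W (upd xi x (xi x - 1)%nat)
            + birth_rate a b N M xi x / q * hit_prob a b N M n' W (upd xi x (S (xi x))))
        (window W)
  end.

Definition xi_o (N : nat) : config :=
  fun x => if Z.eq_dec x 0 then N else 0%nat.

(* extinction probability under P_o is the supremum over n of hit_prob ... n;
   survival probability P_o(xi_t <> 0 for all t > 0) = 1 - that supremum. *)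
Definition extinction_within (a b : R) (N M : nat) : R -> Prop :=
  fun r => exists n : nat, r = hit_prob a b N M n 0 (xi_o N).

(* Main.v *)
Require Import Defs.
From Stdlib Require Import Reals ZArith List Lra Lia.
Import ListNotations.
Open Scope R_scope.

Lemma rsum_cons {A} (f : A -> R) x l : rsum f (x :: l) = f x + rsum f l.
Proof. reflexivity. Qed.

Lemma rsum_nil {A} (f : A -> R) : rsum f [] = 0.
Proof. reflexivity. Qed.

Lemma rsum_app {A} (f : A -> R) l1 l2 : rsum f (l1 ++ l2) = rsum f l1 + rsum f l2.
Proof. induction l1; simpl; unfold rsum in *; simpl; [lra|]. rewrite IHl1; lra. Qed.

Lemma rsum_ext {A} (f g : A -> R) l : (forall x, In x l -> f x = g x) -> rsum f l = rsum g l.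
Proof. induction l; intros H; [reflexivity|]. rewrite !rsum_cons, H by (left; auto).
  rewrite IHl; auto. intros; apply H; right; auto. Qed.

Lemma rsum_le {A} (f g : A -> R) l : (forall x, In x l -> f x <= g x) -> rsum f l <= rsum g l.
Proof. induction l; intros H; [rewrite !rsum_nil; lra|]. rewrite !rsum_cons.
  assert (f a <= g a) by (apply H; left; auto).
  assert (rsum f l <= rsum g l) by (apply IHl; intros; apply H; right; auto). lra. Qed.

Lemma rsum_plus {A} (f g : A -> R) l : rsum (fun x => f x + g x) l = rsum f l + rsum g l.
Proof. induction l; [rewrite !rsum_nil; lra|]. rewrite !rsum_cons, IHl; lra. Qed.

Lemma rsum_scal {A} (c : R) (f : A -> R) l : rsum (fun x => c * f x) l = c * rsum f l.
Proof. induction l; [rewrite !rsum_nil; lra|]. rewrite !rsum_cons, IHl; lra. Qed.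

Lemma rsum_zero {A} (f : A -> R) l : (forall x, In x l -> f x = 0) -> rsum f l = 0.
Proof. intros H. rewrite (rsum_ext f (fun _ => 0)) by auto.
  induction l; [reflexivity|]. rewrite rsum_cons, IHl; [lra|]. intros; apply H; right; auto. Qed.

Lemma rsum_nonneg {A} (f : A -> R) l : (forall x, In x l -> 0 <= f x) -> 0 <= rsum f l.
Proof. intros H. rewrite <- (rsum_zero (fun _ => 0) l) by auto. apply rsum_le; auto. Qed.

Lemma rsum_ge_term {A} (f : A -> R) l x : (forall y, In y l -> 0 <= f y) -> In x l -> f x <= rsum f l.
Proof. induction l; intros H Hx; [destruct Hx|]. rewrite rsum_cons. destruct Hx as [<-|Hx].
  - assert (0 <= rsum f l) by (apply rsum_nonneg; intros; apply H; right; auto). lra.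
  - assert (0 <= f a) by (apply H; left; auto).
    assert (f x <= rsum f l) by (apply IHl; auto; intros; apply H; right; auto). lra. Qed.

Lemma rsum_min {A} (f g : A -> R) l :
  rsum (fun x => Rmin (f x) (g x)) l <= Rmin (rsum f l) (rsum g l).
Proof. apply Rmin_glb; apply rsum_le; intros; [apply Rmin_l|apply Rmin_r]. Qed.

Lemma rsum_div {A} (f : A -> R) q l : rsum (fun x => f x / q) l = rsum f l / q.
Proof. unfold Rdiv. rewrite (rsum_ext _ (fun x => /q * f x)) by (intros; lra).
  rewrite rsum_scal; lra. Qed.

Lemma rsum_upd {A} (f g : A -> R) l x : NoDup l -> In x l ->
  (forall y, In y l -> y <> x -> g y = f y) -> rsum g l = rsum f l - f x + g x.
Proof. induction l; intros ND Hx H; [destruct Hx|]. inversion ND; subst. rewrite !rsum_cons.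
  destruct Hx as [<-|Hx].
  - rewrite (rsum_ext g f); [lra|]. intros y Hy; apply H; [right; auto|]. intros ->; contradiction.
  - assert (E: rsum g l = rsum f l - f x + g x).
    { apply IHl; auto. intros; apply H; auto; right; auto. }
    assert (E2: g a = f a). { apply H; [left; auto|]. intros ->; contradiction. }
    lra. Qed.

Lemma rsum_notin {A} (f g : A -> R) l x : ~ In x l ->
  (forall y, In y l -> y <> x -> g y = f y) -> rsum g l = rsum f l.
Proof. intros Hn H. apply rsum_ext. intros y Hy; apply H; auto. intros ->; contradiction. Qed.

Lemma window_S W : window (S W) = (- Z.of_nat (S W))%Z :: window W ++ [Z.of_nat (S W)].
Proof. unfold window. replace (2 * S W + 1)%nat with (S (S (2 * W + 1))) by lia.
  rewrite <- cons_seq, seq_S, <- seq_shift. cbn [map]. rewrite map_app, map_map. cbn [map].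
  f_equal.
  f_equal.
  - apply map_ext; intros. rewrite !Nat2Z.inj_succ. lia.
  - f_equal. rewrite !Nat2Z.inj_succ, Nat2Z.inj_add. lia. Qed.

Lemma In_window W x : In x (window W) <-> (- Z.of_nat W <= x <= Z.of_nat W)%Z.
Proof. unfold window. rewrite in_map_iff. split.
  - intros [i [<- Hi]]. apply in_seq in Hi. lia.
  - intros H. exists (Z.to_nat (x + Z.of_nat W)). split; [lia|]. apply in_seq; lia. Qed.

Lemma NoDup_window W : NoDup (window W).
Proof. unfold window. apply NoDup_map_NoDup_ForallPairs; [|apply seq_NoDup].
  intros i j _ _ H; lia. Qed.

Lemma rsum_window_ext (f : Z -> R) M W : (M <= W)%nat ->
  (forall x, (Z.abs x > Z.of_nat M)%Z -> f x = 0) -> rsum f (window W) = rsum f (window M).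
Proof. intros HW H. induction HW; [reflexivity|]. rewrite window_S, rsum_cons, rsum_app, rsum_cons, rsum_nil.
  rewrite !H by lia. lra. Qed.

Definition Good (N M : nat) (xi : config) : Prop :=
  (xi 0%Z <= N)%nat /\ (forall x, x <> 0%Z -> (xi x <= 1)%nat) /\
  (forall x, (Z.abs x > Z.of_nat M)%Z -> xi x = 0%nat).

Definition c0 (b : R) (N M : nat) : R := b / (2 * INR M * INR N * (INR N - 1)).
Definition rr (a : R) (N j : nat) : R := a / (INR N * (INR N - 1)) * INR (j * (j - 1) * (N - j)).

Lemma prod0 N M xi y : Good N M xi -> y <> 0%Z -> (xi y * (xi y - 1) = 0)%nat.
Proof. intros [_ [H _]] Hy. specialize (H y Hy). destruct (xi y) as [|[|]]; lia. Qed.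

Lemma birth0 a b N M xi : Good N M xi -> birth_rate a b N M xi 0%Z = rr a N (xi 0%Z).
Proof. intros G. unfold birth_rate, rr.
  rewrite (rsum_zero _ (seq 1 M)); [lra|]. intros k Hk. apply in_seq in Hk.
  rewrite !(prod0 N M xi _ G) by lia. simpl. lra. Qed.

Lemma birthx a b N M xi x : Good N M xi -> x <> 0%Z ->
  birth_rate a b N M xi x =
  if (Z.abs_nat x <=? M)%nat then c0 b N M * INR (xi 0%Z * (xi 0%Z - 1) * (N - xi x)) else 0.
Proof. intros G Hx. unfold birth_rate.
  rewrite (prod0 N M xi x G Hx). simpl (INR (0 * _)). rewrite Rmult_0_r, Rplus_0_l.
  set (k0 := Z.abs_nat x).
  assert (T: forall k, In k (seq 1 M) -> k <> k0 ->
     b / (2 * INR M * INR N * (INR N - 1)) *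
       (INR (xi (x + Z.of_nat k)%Z * (xi (x + Z.of_nat k)%Z - 1) * (N - xi x)) +
        INR (xi (x - Z.of_nat k)%Z * (xi (x - Z.of_nat k)%Z - 1) * (N - xi x))) = 0).
  { intros k Hk Hne. apply in_seq in Hk. unfold k0 in Hne.
    rewrite !(prod0 N M xi _ G) by lia. simpl. lra. }
  destruct (Nat.leb_spec k0 M) as [Hle|Hgt].
  - assert (Hin: In k0 (seq 1 M)) by (apply in_seq; unfold k0; lia).
    rewrite (rsum_upd (fun _ => 0) _ _ k0 (seq_NoDup _ _) Hin).
    2:{ intros y Hy Hne; apply T; auto. }
    rewrite rsum_zero by auto. unfold c0.
    destruct (Z_lt_le_dec x 0).
    + replace (x + Z.of_nat k0)%Z with 0%Z by (unfold k0; lia).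
      rewrite (prod0 N M xi (x - Z.of_nat k0) G) by (unfold k0; lia). simpl. lra.
    + replace (x - Z.of_nat k0)%Z with 0%Z by (unfold k0; lia).
      rewrite (prod0 N M xi (x + Z.of_nat k0) G) by (unfold k0; lia). simpl. lra.
  - apply rsum_zero. intros k Hk. apply T; auto. apply in_seq in Hk. lia.
Qed.

Fixpoint wrec (a : R) (N : nat) (g : nat -> R) (k : nat) : R :=
  match k with
  | O => g N / INR N
  | S k' => (g (N - S k')%nat + rr a N (N - S k')%nat * wrec a N g k') / INR (N - S k')
  end.

Definition wv a N g j := wrec a N g (N - j).

Fixpoint vsum (a : R) (N : nat) (g : nat -> R) (j : nat) : R :=
  match j with
  | O => 0
  | S j' => vsum a N g j' + (if (2 <=? S j')%nat then wv a N g (S j') else 0)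
  end.

Lemma rr_nonneg a N j : 0 <= a -> (2 <= N)%nat -> 0 <= rr a N j.
Proof. intros Ha HN. unfold rr. apply Rmult_le_pos; [|apply pos_INR].
  apply Rmult_le_pos; [lra|]. apply Rlt_le, Rinv_0_lt_compat.
  assert (2 <= INR N) by (apply (le_INR 2); lia). nra. Qed.

Lemma rrN a N : rr a N N = 0.
Proof. unfold rr. rewrite Nat.sub_diag, Nat.mul_0_r. simpl. lra. Qed.

Lemma rr_small a N j : (j <= 1)%nat -> rr a N j = 0.
Proof. intros H. unfold rr. replace (j * (j - 1))%nat with 0%nat by (destruct j as [|[|]]; lia).
  simpl. lra. Qed.

Lemma wrec_nonneg a N g k : 0 <= a -> (2 <= N)%nat -> (forall j, 0 <= g j) -> 0 <= wrec a N g k.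
Proof. intros Ha HN Hg. induction k; simpl.
  - unfold Rdiv. apply Rmult_le_pos; auto. apply Rlt_le, Rinv_0_lt_compat. apply lt_0_INR; lia.
  - unfold Rdiv. apply Rmult_le_pos.
    + pose proof (rr_nonneg a N (N - S k) Ha HN). pose proof (Hg (N - S k)%nat). nra.
    + destruct (Nat.eq_dec (N - S k) 0) as [E|E].
      * rewrite E. simpl. rewrite Rinv_0. lra.
      * apply Rlt_le, Rinv_0_lt_compat. apply lt_0_INR; lia. Qed.

Lemma wv_nonneg a N g j : 0 <= a -> (2 <= N)%nat -> (forall j, 0 <= g j) -> 0 <= wv a N g j.
Proof. intros; apply wrec_nonneg; auto. Qed.

Lemma wv_rel a N g j : (1 <= j <= N)%nat ->
  INR j * wv a N g j - rr a N j * wv a N g (S j) = g j.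
Proof. intros Hj. unfold wv. destruct (Nat.eq_dec j N) as [->|Hne].
  - rewrite rrN, Nat.sub_diag. simpl. field. apply not_0_INR; lia.
  - replace (N - j)%nat with (S (N - S j)) by lia. simpl.
    replace (N - S (N - S j))%nat with j by lia. field. apply not_0_INR; lia. Qed.

Lemma vsum_nonneg a N g j : 0 <= a -> (2 <= N)%nat -> (forall j, 0 <= g j) -> 0 <= vsum a N g j.
Proof. intros Ha HN Hg. induction j; cbn [vsum]; [lra|].
  pose proof (wv_nonneg a N g (S j) Ha HN Hg).
  destruct (2 <=? S j)%nat; lra. Qed.

Lemma vsum_rel a N g j : (2 <= j)%nat -> vsum a N g j = vsum a N g (j - 1) + wv a N g j.
Proof. intros H. destruct j as [|j]; [lia|]. cbn [vsum]. replace (S j - 1)%nat with j by lia.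
  destruct (Nat.leb_spec 2 (S j)); [reflexivity|lia]. Qed.

Lemma vsum_1 a N g : vsum a N g 1 = 0.
Proof. simpl. lra. Qed.

Definition UU b N := b * INR N.
Definition g1 b N (j : nat) := UU b N * b * INR (j * (j - 1)) / (INR N - 1).
Definition g2 a b N (j : nat) := INR j + rr a N j + 3 * b * INR (j * (j - 1)) / (INR N - 1).

Definition phi a b N M (j : nat) (m : R) : R :=
  if (2 <=? j)%nat then (m * UU b N + vsum a N (g1 b N) j) / INR M else 0.
Definition Vf a b N (j : nat) (m : R) : R :=
  if (2 <=? j)%nat then 2 * m + (1 + vsum a N (g2 a b N) j) else m + INR j.

Lemma absPhi (j r m C M N U vj vm1 vp1 wj wp1 pm1 : R) :
  1 <= N -> 0 <= j -> 0 <= r -> 0 <= m -> 0 <= C -> 0 < M -> 0 <= U -> 0 <= vj ->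
  vj = vm1 + wj -> vp1 = vj + wp1 -> j * wj - r * wp1 = 2 * M * C * N * U ->
  C * (N - 1) * M <= U -> pm1 <= (m * U + vm1) / M ->
  j * pm1 + r * ((m * U + vp1) / M) + m * (((m - 1) * U + vj) / M + C * (N - 1))
  + (2 * M - m) * (C * N * (((m + 1) * U + vj) / M))
  <= (j + r + m + C * (2 * M * N - m)) * ((m * U + vj) / M).
Proof. intros. 
  assert (j * pm1 <= j * ((m * U + vm1) / M)) by (apply Rmult_le_compat_l; auto).
  cut (j * ((m * U + vm1) / M) + r * ((m * U + vp1) / M) + m * (((m - 1) * U + vj) / M + C * (N - 1))
  + (2 * M - m) * (C * N * (((m + 1) * U + vj) / M))
  <= (j + r + m + C * (2 * M * N - m)) * ((m * U + vj) / M)). { lra. }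
  apply Rmult_le_reg_r with M; auto.
  assert (E: ((j + r + m + C * (2 * M * N - m)) * ((m * U + vj) / M)) * M -
     (j * ((m * U + vm1) / M) + r * ((m * U + vp1) / M) + m * (((m - 1) * U + vj) / M + C * (N - 1))
      + (2 * M - m) * (C * N * (((m + 1) * U + vj) / M))) * M
     = (j * wj - r * wp1 - 2 * M * C * N * U) + m * (U - C * (N - 1) * M) + m * C * N * U
       + C * m * (N - 1) * (m * U + vj) - C * m * (N-1) * U + C*m*(N-1)*U).
  { subst vj vp1. field. lra. }
  assert (0 <= m * (U - C * (N - 1) * M)) by (apply Rmult_le_pos; lra).
  assert (0 <= m * C * N * U).
  { repeat apply Rmult_le_pos; lra. }
  assert (0 <= C * m * (N - 1) * (m * U + vj)).
  { repeat apply Rmult_le_pos; try lra. apply Rplus_le_le_0_compat; auto. apply Rmult_le_pos; lra. }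
  lra.
Qed.

Lemma absV (j r m C M N bj bm1 bp1 gj gp1 Vm1 : R) :
  1 <= N -> 0 <= j -> 0 <= r -> 0 <= m -> 0 <= C -> 0 < M -> 1 <= bj ->
  bj = bm1 + gj -> bp1 = bj + gp1 -> j * gj - r * gp1 = j + r + 3 * (2 * M * C * N) ->
  Vm1 <= 2 * m + bm1 ->
  j * Vm1 + r * (2 * m + bp1) + m * (2 * (m - 1) + bj) + (2 * M - m) * (C * N * (2 * (m + 1) + bj))
  <= (j + r + m + C * (2 * M * N - m)) * (2 * m + bj - 1).
Proof. intros.
  assert (j * Vm1 <= j * (2 * m + bm1)) by (apply Rmult_le_compat_l; auto).
  assert (E: (j + r + m + C * (2 * M * N - m)) * (2 * m + bj - 1) -
    (j * (2 * m + bm1) + r * (2 * m + bp1) + m * (2 * (m - 1) + bj) + (2 * M - m) * (C * N * (2 * (m + 1) + bj)))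
    = (j * gj - r * gp1 - (j + r + 3 * (2 * M * C * N))) + m + 3 * C * N * m
      + C * (N - 1) * m * (2 * m + bj - 1)).
  { subst bj bp1. ring. }
  assert (0 <= C * N * m) by (repeat apply Rmult_le_pos; lra).
  assert (0 <= C * (N - 1) * m * (2 * m + bj - 1)) by (repeat apply Rmult_le_pos; lra).
  lra.
Qed.

Lemma J_le N j : (1 <= N)%nat -> (j <= N)%nat -> INR (j * (j - 1)) <= INR N * (INR N - 1).
Proof. intros H1 H. assert (INR (j * (j-1)) <= INR (N * (N - 1))) by (apply le_INR; nia).
  rewrite (mult_INR N), (minus_INR N 1) in H0 by lia. simpl in H0. lra. Qed.

Lemma key_facts b N M j : 0 < b -> (2 <= N)%nat -> (1 <= M)%nat -> (j <= N)%nat ->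
  let C := c0 b N M * INR (j * (j - 1)) in
  0 <= C /\ 2 * INR M * C * INR N = b * INR (j * (j - 1)) / (INR N - 1) /\
  C * (INR N - 1) * INR M <= UU b N.
Proof. intros Hb HN HM Hj C.
  assert (2 <= INR N) by (apply (le_INR 2); lia).
  assert (1 <= INR M) by (apply (le_INR 1); lia).
  pose proof (J_le N j ltac:(lia) Hj). pose proof (pos_INR (j * (j - 1))).
  unfold C, c0, UU. split; [|split].
  - apply Rmult_le_pos; auto. unfold Rdiv. apply Rmult_le_pos; [lra|].
    apply Rlt_le, Rinv_0_lt_compat. apply Rmult_lt_0_compat; [|lra]. nra.
  - field. repeat split; lra.
  - replace (b / (2 * INR M * INR N * (INR N - 1)) * INR (j * (j - 1)) * (INR N - 1) * INR M)
      with (b * INR (j * (j - 1)) / (2 * INR N)) by (field; repeat split; lra).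
    apply Rmult_le_reg_r with (2 * INR N); [lra|]. unfold Rdiv.
    rewrite Rmult_assoc, Rinv_l by lra. nra. Qed.

Lemma algPhi a b N M j m : 0 <= a -> 0 < b -> (2 <= N)%nat -> (1 <= M)%nat -> (j <= N)%nat -> 0 <= m ->
  let C := c0 b N M * INR (j * (j - 1)) in let r := rr a N j in
  INR j * phi a b N M (j - 1) m + r * phi a b N M (S j) m
  + m * (phi a b N M j (m - 1) + C * (INR N - 1))
  + (2 * INR M - m) * (C * INR N * phi a b N M j (m + 1))
  <= (INR j + r + m + C * (2 * INR M * INR N - m)) * phi a b N M j m.
Proof. intros Ha Hb HN HM Hj Hm C r.
  destruct (key_facts b N M j Hb HN HM Hj) as [HC [HC2 HC3]]; fold C in HC, HC2, HC3.
  assert (1 <= INR M) by (apply (le_INR 1); lia).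
  assert (2 <= INR N) by (apply (le_INR 2); lia).
  assert (Hg : forall j, 0 <= g1 b N j).
  { intros k. unfold g1, UU, Rdiv. pose proof (pos_INR (k * (k-1))). pose proof (pos_INR N).
    repeat apply Rmult_le_pos; try lra. apply Rlt_le, Rinv_0_lt_compat; lra. }
  destruct (Nat.leb_spec 2 j) as [Hj2|Hj2].
  - unfold phi at 2 3 4 5. rewrite !(proj2 (Nat.leb_le 2 j)) by lia.
    rewrite (proj2 (Nat.leb_le 2 (S j))) by lia.
    apply (absPhi (INR j) r m C (INR M) (INR N) (UU b N) (vsum a N (g1 b N) j)
       (vsum a N (g1 b N) (j - 1)) (vsum a N (g1 b N) (S j)) (wv a N (g1 b N) j)
       (wv a N (g1 b N) (S j))); try lra.
    + apply pos_INR.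
    + apply rr_nonneg; auto.
    + unfold UU. pose proof (pos_INR N); nra.
    + apply vsum_nonneg; auto.
    + apply vsum_rel; lia.
    + rewrite (vsum_rel a N _ (S j)) by lia. replace (S j - 1)%nat with j by lia. lra.
    + unfold r. rewrite wv_rel by lia. unfold g1. rewrite <- (Rmult_comm (UU b N)).
      rewrite HC2. unfold Rdiv. ring.
    + unfold phi. destruct (Nat.leb_spec 2 (j - 1)); [lra|].
      replace (j - 1)%nat with 1%nat by lia. rewrite vsum_1.
      unfold UU. apply Rmult_le_pos; [|apply Rlt_le, Rinv_0_lt_compat; lra].
      pose proof (pos_INR N). assert (0 <= b * INR N) by nra. nra.
  - assert (C = 0). { unfold C. replace (j * (j - 1))%nat with 0%nat by (destruct j as [|[|]]; lia). simpl; lra. }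
    assert (r = 0) by (apply rr_small; lia).
    unfold phi. rewrite (proj2 (Nat.leb_gt 2 j)) by lia.
    rewrite (proj2 (Nat.leb_gt 2 (j - 1))) by lia. subst r. rewrite H1, H2. lra.
Qed.

Lemma algV a b N M j m : 0 <= a -> 0 < b -> (2 <= N)%nat -> (1 <= M)%nat -> (j <= N)%nat -> 0 <= m ->
  let C := c0 b N M * INR (j * (j - 1)) in let r := rr a N j in
  INR j * Vf a b N (j - 1) m + r * Vf a b N (S j) m
  + m * Vf a b N j (m - 1)
  + (2 * INR M - m) * (C * INR N * Vf a b N j (m + 1))
  <= (INR j + r + m + C * (2 * INR M * INR N - m)) * (Vf a b N j m - 1).
Proof. intros Ha Hb HN HM Hj Hm C r.
  destruct (key_facts b N M j Hb HN HM Hj) as [HC [HC2 HC3]]; fold C in HC, HC2, HC3.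
  assert (1 <= INR M) by (apply (le_INR 1); lia).
  assert (2 <= INR N) by (apply (le_INR 2); lia).
  assert (Hg : forall j, 0 <= g2 a b N j).
  { intros k. unfold g2, Rdiv. pose proof (pos_INR (k * (k-1))). pose proof (pos_INR k).
    pose proof (rr_nonneg a N k Ha HN).
    assert (0 <= 3 * b * INR (k * (k - 1)) * / (INR N - 1)).
    { repeat apply Rmult_le_pos; try lra. apply Rlt_le, Rinv_0_lt_compat; lra. }
    lra. }
  destruct (Nat.leb_spec 2 j) as [Hj2|Hj2].
  - unfold Vf at 2 3 4 5. rewrite !(proj2 (Nat.leb_le 2 j)) by lia.
    rewrite (proj2 (Nat.leb_le 2 (S j))) by lia.
    apply (absV (INR j) r m C (INR M) (INR N) (1 + vsum a N (g2 a b N) j)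
       (1 + vsum a N (g2 a b N) (j - 1)) (1 + vsum a N (g2 a b N) (S j)) (wv a N (g2 a b N) j)
       (wv a N (g2 a b N) (S j))); try lra.
    + apply pos_INR.
    + apply rr_nonneg; auto.
    + pose proof (vsum_nonneg a N (g2 a b N) j Ha HN Hg). lra.
    + rewrite (vsum_rel a N _ j) by lia. lra.
    + rewrite (vsum_rel a N _ (S j)) by lia. replace (S j - 1)%nat with j by lia. lra.
    + unfold r. rewrite wv_rel by lia. unfold g2. fold r.
      replace (3 * (2 * INR M * C * INR N)) with (3 * (2 * INR M * C * INR N)) by reflexivity.
      rewrite HC2. unfold Rdiv. ring.
    + unfold Vf. destruct (Nat.leb_spec 2 (j - 1)); [lra|].
      replace (j - 1)%nat with 1%nat by lia. rewrite vsum_1. simpl. lra.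
  - assert (C = 0). { unfold C. replace (j * (j - 1))%nat with 0%nat by (destruct j as [|[|]]; lia). simpl; lra. }
    assert (r = 0) by (apply rr_small; lia).
    unfold Vf. rewrite (proj2 (Nat.leb_gt 2 j)) by lia.
    rewrite (proj2 (Nat.leb_gt 2 (j - 1))) by lia. rewrite H1, H2.
    destruct j as [|[|]]; [simpl; nra|simpl; nra|lia].
Qed.

Lemma div_nonneg x y : 0 <= x -> 0 <= y -> 0 <= x / y.
Proof. intros Hx Hy. destruct (Req_dec y 0) as [->|H].
  - unfold Rdiv. rewrite Rinv_0. lra.
  - unfold Rdiv. apply Rmult_le_pos; auto. apply Rlt_le, Rinv_0_lt_compat. lra. Qed.

Lemma birth_nonneg a b N M xi x : 0 <= a -> 0 <= b -> (2 <= N)%nat -> 0 <= birth_rate a b N M xi x.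
Proof. intros Ha Hb HN. assert (2 <= INR N) by (apply (le_INR 2); lia). unfold birth_rate.
  apply Rplus_le_le_0_compat.
  - apply Rmult_le_pos; [apply div_nonneg; nra|apply pos_INR].
  - apply rsum_nonneg. intros k _. apply Rmult_le_pos.
    + apply div_nonneg; [lra|]. pose proof (pos_INR M). assert (0 <= 2 * INR M * INR N) by nra. nra.
    + pose proof (pos_INR (xi (x + Z.of_nat k)%Z * (xi (x + Z.of_nat k)%Z - 1) * (N - xi x))).
      pose proof (pos_INR (xi (x - Z.of_nat k)%Z * (xi (x - Z.of_nat k)%Z - 1) * (N - xi x))). lra. Qed.

Lemma hit_nonneg a b N M n L xi : 0 <= a -> 0 <= b -> (2 <= N)%nat -> 0 <= hit_prob a b N M n L xi.
Proof. intros Ha Hb HN. revert L xi. induction n; intros L xi; simpl.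
  - destruct (is_zero L xi); lra.
  - destruct (is_zero L xi); [lra|]. apply rsum_nonneg. intros x _.
    set (q := rsum _ _).
    assert (0 <= q). { apply rsum_nonneg. intros y _. unfold death_rate.
      pose proof (pos_INR (xi y)). pose proof (birth_nonneg a b N M xi y Ha Hb HN). lra. }
    pose proof (pos_INR (xi x)). pose proof (birth_nonneg a b N M xi x Ha Hb HN).
    apply Rplus_le_le_0_compat; apply Rmult_le_pos; try apply div_nonneg; auto. Qed.

Definition mC (M : nat) (xi : config) : R :=
  rsum (fun x => if Z.eq_dec x 0 then 0 else INR (xi x)) (window M).

Lemma mC_nonneg M xi : 0 <= mC M xi.
Proof. apply rsum_nonneg. intros x _. destruct (Z.eq_dec x 0); [lra|apply pos_INR]. Qed.

Lemma upd_same xi x k : upd xi x k x = k.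
Proof. unfold upd. destruct (Z.eq_dec x x); congruence. Qed.
Lemma upd_other xi x k y : y <> x -> upd xi x k y = xi y.
Proof. unfold upd. destruct (Z.eq_dec y x); congruence. Qed.

Lemma mC_upd0 M xi k : mC M (upd xi 0 k) = mC M xi.
Proof. apply rsum_ext. intros x _. destruct (Z.eq_dec x 0); [reflexivity|]. rewrite upd_other; auto. Qed.

Lemma mC_updx M xi x k : x <> 0%Z -> (Z.abs_nat x <= M)%nat ->
  mC M (upd xi x k) = mC M xi - INR (xi x) + INR k.
Proof. intros Hx HM. unfold mC.
  rewrite (rsum_upd (fun x => if Z.eq_dec x 0 then 0 else INR (xi x)) _ _ x (NoDup_window M)).
  - destruct (Z.eq_dec x 0); [contradiction|]. rewrite upd_same. lra.
  - apply In_window; lia.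
  - intros y _ Hy. destruct (Z.eq_dec y 0); [reflexivity|]. rewrite upd_other; auto. Qed.

Lemma Good_upd0 N M xi k : Good N M xi -> (k <= N)%nat -> Good N M (upd xi 0 k).
Proof. intros [G1 [G2 G3]] Hk. split; [|split].
  - rewrite upd_same; auto.
  - intros x Hx. rewrite upd_other; auto.
  - intros x Hx. rewrite upd_other by lia. auto. Qed.

Lemma Good_updx N M xi x k : Good N M xi -> x <> 0%Z -> (k <= 1)%nat -> (Z.abs_nat x <= M)%nat ->
  Good N M (upd xi x k).
Proof. intros [G1 [G2 G3]] Hx Hk HM. split; [|split].
  - rewrite upd_other; auto.
  - intros y Hy. destruct (Z.eq_dec y x) as [->|Hne]; [rewrite upd_same; auto|rewrite upd_other; auto].
  - intros y Hy. rewrite upd_other by lia. auto. Qed.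

Lemma rsum_const1 {A} (l : list A) : rsum (fun _ => 1) l = INR (length l).
Proof. induction l; [reflexivity|]. rewrite rsum_cons, IHl. simpl length. rewrite S_INR. lra. Qed.

Lemma length_window W : length (window W) = (2 * W + 1)%nat.
Proof. unfold window. rewrite length_map, length_seq. reflexivity. Qed.

Lemma sum_form (M W : nat) (xi : config) (A al be : R) : (M <= W)%nat ->
  rsum (fun x => if Z.eq_dec x 0 then A
                 else if (Z.abs_nat x <=? M)%nat then al * INR (xi x) + be * (1 - INR (xi x)) else 0)
       (window W)
  = A + al * mC M xi + be * (2 * INR M - mC M xi).
Proof. intros HW. rewrite rsum_window_ext with (M := M); auto.
  2:{ intros x Hx. destruct (Z.eq_dec x 0); [lia|]. destruct (Nat.leb_spec (Z.abs_nat x) M); [lia|reflexivity]. }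
  set (h := fun x => if Z.eq_dec x 0 then 0 else al * INR (xi x) + be * (1 - INR (xi x))).
  rewrite (rsum_upd h _ _ 0%Z (NoDup_window M)).
  2:{ apply In_window; lia. }
  2:{ intros y Hy Hne. unfold h. destruct (Z.eq_dec y 0); [contradiction|].
      apply In_window in Hy. destruct (Nat.leb_spec (Z.abs_nat y) M); [reflexivity|lia]. }
  destruct (Z.eq_dec 0 0) as [_|]; [|congruence].
  unfold h. destruct (Z.eq_dec 0 0) as [_|]; [|congruence].
  assert (E1: rsum (fun x => if Z.eq_dec x 0 then 0 else 1) (window M) = 2 * INR M).
  { rewrite (rsum_upd (fun _ => 1) _ _ 0%Z (NoDup_window M)).
    - rewrite rsum_const1, length_window. destruct (Z.eq_dec 0 0); [|congruence].
      rewrite plus_INR, mult_INR. simpl. lra.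
    - apply In_window; lia.
    - intros y _ Hne. destruct (Z.eq_dec y 0); [contradiction|reflexivity]. }
  rewrite (rsum_ext _ (fun x => al * (if Z.eq_dec x 0 then 0 else INR (xi x)) +
      (be * (if Z.eq_dec x 0 then 0 else 1) + (- be) * (if Z.eq_dec x 0 then 0 else INR (xi x))))).
  2:{ intros x _. destruct (Z.eq_dec x 0); lra. }
  rewrite !rsum_plus, !rsum_scal, E1. fold (mC M xi). lra.
Qed.

Definition phiX a b N M xi := phi a b N M (xi 0%Z) (mC M xi).
Definition VX a b N M xi := Vf a b N (xi 0%Z) (mC M xi).
Definition kap (n : nat) (v : R) := Rmin 1 (v / INR n).

Definition lq a b N M xi (x : Z) : R :=
  let j := xi 0%Z in let C := c0 b N M * INR (j * (j - 1)) in
  if Z.eq_dec x 0 then INR j + rr a N j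
  else if (Z.abs_nat x <=? M)%nat then (1 + C * (INR N - 1)) * INR (xi x) + (C * INR N) * (1 - INR (xi x))
  else 0.
Definition lphi a b N M xi (x : Z) : R :=
  let j := xi 0%Z in let m := mC M xi in let C := c0 b N M * INR (j * (j - 1)) in
  if Z.eq_dec x 0 then INR j * phi a b N M (j - 1) m + rr a N j * phi a b N M (S j) m
  else if (Z.abs_nat x <=? M)%nat then
    (phi a b N M j (m - 1) + C * (INR N - 1)) * INR (xi x) + (C * INR N * phi a b N M j (m + 1)) * (1 - INR (xi x))
  else 0.
Definition lV a b N M xi (x : Z) : R :=
  let j := xi 0%Z in let m := mC M xi in let C := c0 b N M * INR (j * (j - 1)) in
  if Z.eq_dec x 0 then INR j * Vf a b N (j - 1) m + rr a N j * Vf a b N (S j) m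
  else if (Z.abs_nat x <=? M)%nat then
    Vf a b N j (m - 1) * INR (xi x) + (C * INR N * Vf a b N j (m + 1)) * (1 - INR (xi x))
  else 0.

Lemma kap_le1 n v : kap n v <= 1.
Proof. apply Rmin_l. Qed.
Lemma kap_leV n v : kap n v <= v / INR n.
Proof. apply Rmin_r. Qed.

Lemma comb2 d bb k1 k2 V1 V2 n : 0 <= d -> 0 <= bb -> (1 <= n)%nat ->
  k1 <= kap n V1 -> k2 <= kap n V2 ->
  d * k1 + bb * k2 <= Rmin (d + bb) ((d * V1 + bb * V2) / INR n).
Proof. intros Hd Hb Hn H1 H2. pose proof (kap_le1 n V1). pose proof (kap_le1 n V2).
  pose proof (kap_leV n V1). pose proof (kap_leV n V2).
  assert (0 < INR n) by (apply lt_0_INR; lia).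
  apply Rmin_glb.
  - assert (d * k1 <= d * 1) by (apply Rmult_le_compat_l; lra).
    assert (bb * k2 <= bb * 1) by (apply Rmult_le_compat_l; lra). lra.
  - assert (d * k1 <= d * (V1 / INR n)) by (apply Rmult_le_compat_l; lra).
    assert (bb * k2 <= bb * (V2 / INR n)) by (apply Rmult_le_compat_l; lra).
    unfold Rdiv in *. lra. Qed.

Lemma INR_JN j N k : (k <= N)%nat -> INR (j * (j - 1) * (N - k)) = INR (j * (j - 1)) * (INR N - INR k).
Proof. intros H. rewrite mult_INR, minus_INR by lia. reflexivity. Qed.

Lemma qx a b N M xi x : Good N M xi -> (2 <= N)%nat ->
  death_rate xi x + birth_rate a b N M xi x = lq a b N M xi x.
Proof. intros G HN. unfold lq, death_rate. destruct (Z.eq_dec x 0) as [->|Hx].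
  - rewrite birth0 by auto. reflexivity.
  - rewrite birthx by auto. destruct G as [G1 [G2 G3]].
    destruct (Nat.leb_spec (Z.abs_nat x) M).
    + rewrite INR_JN by (specialize (G2 x Hx); lia).
      specialize (G2 x Hx). destruct (xi x) as [|[|]]; [|simpl INR|lia]; simpl INR; lra.
    + rewrite G3 by lia. simpl. lra. Qed.

Lemma comb1 d k V n : 0 <= d -> (1 <= n)%nat -> k <= kap n V -> d * k <= Rmin d (d * V / INR n).
Proof. intros Hd Hn Hk. pose proof (comb2 d 0 k 0 V 0 n Hd (Rle_refl 0) Hn Hk).
  replace (d + 0) with d in H by ring. replace (d * V + 0 * 0) with (d * V) in H by ring.
  replace (d * k) with (d * k + 0 * 0) by ring. apply H.
  unfold kap. apply Rmin_glb; [lra|]. unfold Rdiv; lra. Qed.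

Lemma perx a b N M n W xi x : 0 <= a -> 0 < b -> (2 <= N)%nat -> (1 <= M)%nat -> (1 <= n)%nat ->
  Good N M xi ->
  (forall xi', Good N M xi' -> 1 - phiX a b N M xi' - kap n (VX a b N M xi') <= hit_prob a b N M n W xi') ->
  lq a b N M xi x - lphi a b N M xi x - Rmin (lq a b N M xi x) (lV a b N M xi x / INR n)
  <= death_rate xi x * hit_prob a b N M n W (upd xi x (xi x - 1)%nat)
     + birth_rate a b N M xi x * hit_prob a b N M n W (upd xi x (S (xi x))).
Proof. intros Ha Hb HN HM Hn G IH.
  assert (Hb0 : 0 <= b) by lra.
  pose proof (hit_nonneg a b N M n W (upd xi x (S (xi x))) Ha Hb0 HN) as Hup0.
  pose proof G as [G1 [G2 G3]].
  assert (0 < INR n) by (apply lt_0_INR; lia).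
  unfold lq, lphi, lV, death_rate. destruct (Z.eq_dec x 0) as [->|Hx].
  - rewrite birth0 by auto.
    set (j := xi 0%Z). fold j in G1.
    pose proof (rr_nonneg a N j Ha HN) as Hr.
    assert (Hd := IH _ (Good_upd0 N M xi (j - 1) G ltac:(lia))).
    unfold phiX, VX in Hd. rewrite upd_same, mC_upd0 in Hd.
    destruct (Nat.eq_dec j N) as [E|E].
    + rewrite E, rrN. rewrite E in Hd.
      pose proof (comb1 (INR N) (kap n (Vf a b N (N - 1) (mC M xi))) (Vf a b N (N - 1) (mC M xi)) n
                   (pos_INR N) Hn (Rle_refl _)).
      assert (INR N * (1 - phi a b N M (N - 1) (mC M xi) - kap n (Vf a b N (N - 1) (mC M xi)))
              <= INR N * hit_prob a b N M n W (upd xi 0 (N - 1))) by (apply Rmult_le_compat_l; auto; apply pos_INR).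
      replace (INR N + 0) with (INR N) by ring.
      replace ((INR N * Vf a b N (N - 1) (mC M xi) + 0 * Vf a b N (S N) (mC M xi)) / INR n)
        with (INR N * Vf a b N (N - 1) (mC M xi) / INR n) by (unfold Rdiv; ring).
      lra.
    + assert (Hu := IH _ (Good_upd0 N M xi (S j) G ltac:(lia))).
      unfold phiX, VX in Hu. rewrite upd_same, mC_upd0 in Hu.
      pose proof (comb2 (INR j) (rr a N j) (kap n (Vf a b N (j - 1) (mC M xi)))
         (kap n (Vf a b N (S j) (mC M xi))) (Vf a b N (j - 1) (mC M xi)) (Vf a b N (S j) (mC M xi)) n
         (pos_INR j) Hr Hn (Rle_refl _) (Rle_refl _)).
      assert (INR j * (1 - phi a b N M (j - 1) (mC M xi) - kap n (Vf a b N (j - 1) (mC M xi)))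
              <= INR j * hit_prob a b N M n W (upd xi 0 (j - 1))) by (apply Rmult_le_compat_l; auto; apply pos_INR).
      assert (rr a N j * (1 - phi a b N M (S j) (mC M xi) - kap n (Vf a b N (S j) (mC M xi)))
              <= rr a N j * hit_prob a b N M n W (upd xi 0 (S j))) by (apply Rmult_le_compat_l; auto).
      lra.
  - rewrite birthx by auto. set (j := xi 0%Z). set (m := mC M xi).
    set (C := c0 b N M * INR (j * (j - 1))).
    destruct (Nat.leb_spec (Z.abs_nat x) M) as [Hin|Hout].
    + assert (HC : 0 <= C).
      { destruct (key_facts b N M j Hb HN HM G1) as [HC _]. exact HC. }
      specialize (G2 x Hx). destruct (xi x) as [|[|]] eqn:Ex; [| |lia].
      *
        rewrite INR_JN by lia. rewrite <- Rmult_assoc. fold C.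
        assert (Hu := IH _ (Good_updx N M xi x 1 G Hx ltac:(lia) Hin)).
        unfold phiX, VX in Hu. rewrite upd_other in Hu by auto. rewrite mC_updx in Hu by auto.
        rewrite Ex in Hu. fold j m in Hu. simpl INR in *. replace (m - 0 + 1) with (m + 1) in Hu by ring.
        set (bb := C * (INR N - 0)).
        assert (0 <= bb) by (unfold bb; pose proof (pos_INR N); nra).
        pose proof (comb1 bb (kap n (Vf a b N j (m + 1))) (Vf a b N j (m + 1)) n H0 Hn (Rle_refl _)).
        assert (bb * (1 - phi a b N M j (m + 1) - kap n (Vf a b N j (m + 1)))
              <= bb * hit_prob a b N M n W (upd xi x 1)) by (apply Rmult_le_compat_l; auto).
        replace ((1 + C * (INR N - 1)) * 0 + C * INR N * (1 - 0)) with bb by (unfold bb; ring).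
        replace ((phi a b N M j (m - 1) + C * (INR N - 1)) * 0 + C * INR N * phi a b N M j (m + 1) * (1 - 0))
          with (bb * phi a b N M j (m + 1)) by (unfold bb; ring).
        replace ((Vf a b N j (m - 1) * 0 + C * INR N * Vf a b N j (m + 1) * (1 - 0)) / INR n)
          with (bb * Vf a b N j (m + 1) / INR n) by (unfold bb, Rdiv; ring).
        lra.
      *
        rewrite INR_JN by lia. rewrite <- Rmult_assoc. fold C.
        assert (Hd := IH _ (Good_updx N M xi x 0 G Hx ltac:(lia) Hin)).
        unfold phiX, VX in Hd. rewrite upd_other in Hd by auto. rewrite mC_updx in Hd by auto.
        rewrite Ex in Hd. fold j m in Hd. simpl INR in *. replace (m - 1 + 0) with (m - 1) in Hd by ring.
        replace (1 - 1)%nat with 0%nat by lia.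
        set (bb := C * (INR N - 1)).
        assert (0 <= bb) by (unfold bb; assert (2 <= INR N) by (apply (le_INR 2); lia); nra).
        pose proof (comb1 1 (kap n (Vf a b N j (m - 1))) (Vf a b N j (m - 1)) n ltac:(lra) Hn (Rle_refl _)).
        assert (Hm1: bb * 0 <= bb * hit_prob a b N M n W (upd xi x 2)) by (apply Rmult_le_compat_l; auto).
        assert (Rmin 1 (1 * Vf a b N j (m - 1) / INR n) <=
                Rmin ((1 + C * (INR N - 1)) * 1 + C * INR N * (1 - 1))
                 ((Vf a b N j (m - 1) * 1 + C * INR N * Vf a b N j (m + 1) * (1 - 1)) / INR n)).
        { apply Rmin_glb.
          - pose proof (Rmin_l 1 (1 * Vf a b N j (m - 1) / INR n)). unfold bb in *. nra.
          - pose proof (Rmin_r 1 (1 * Vf a b N j (m - 1) / INR n)). unfold Rdiv in *. nra. }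
        unfold bb in *. lra.
    + rewrite G3 by lia. simpl INR.
      replace (Rmin 0 (0 / INR n)) with 0 by (unfold Rdiv; rewrite Rmult_0_l; unfold Rmin; destruct Rle_dec; lra).
      pose proof (hit_nonneg a b N M n W (upd xi x (0 - 1)) Ha Hb0 HN). lra.
Qed.

Lemma forallb_false {A} (f : A -> bool) l : forallb f l = false -> exists x, In x l /\ f x = false.
Proof. induction l; simpl; [discriminate|]. destruct (f a) eqn:E; simpl.
  - intros H; destruct (IHl H) as [x [Hx Hf]]; exists x; auto.
  - intros _; exists a; auto. Qed.

Lemma phi_nonneg a b N M j m : 0 <= a -> 0 < b -> (2 <= N)%nat -> (1 <= M)%nat -> 0 <= m -> 0 <= phi a b N M j m.
Proof. intros Ha Hb HN HM Hm. unfold phi. destruct (2 <=? j)%nat; [|lra].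
  assert (Hg : forall j, 0 <= g1 b N j).
  { intros k. unfold g1, UU, Rdiv. pose proof (pos_INR (k * (k-1))). pose proof (pos_INR N).
    assert (2 <= INR N) by (apply (le_INR 2); lia).
    repeat apply Rmult_le_pos; try lra. apply Rlt_le, Rinv_0_lt_compat; lra. }
  pose proof (vsum_nonneg a N (g1 b N) j Ha HN Hg).
  apply div_nonneg; [|apply pos_INR]. unfold UU. pose proof (pos_INR N).
  assert (0 <= b * INR N) by nra. nra. Qed.

Lemma g2_nonneg a b N j : 0 <= a -> 0 < b -> (2 <= N)%nat -> 0 <= g2 a b N j.
Proof. intros Ha Hb HN. assert (2 <= INR N) by (apply (le_INR 2); lia).
  unfold g2, Rdiv. pose proof (pos_INR (j * (j-1))). pose proof (pos_INR j).
  pose proof (rr_nonneg a N j Ha HN).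
  assert (0 <= 3 * b * INR (j * (j - 1)) * / (INR N - 1)).
  { repeat apply Rmult_le_pos; try lra. apply Rlt_le, Rinv_0_lt_compat; lra. }
  lra. Qed.

Lemma Vf_ge a b N j m : 0 <= a -> 0 < b -> (2 <= N)%nat -> 0 <= m -> m + INR j <= Vf a b N j m \/ (2 <= j)%nat /\ 2 * m + 1 <= Vf a b N j m.
Proof. intros Ha Hb HN Hm. unfold Vf. destruct (Nat.leb_spec 2 j).
  - right. split; auto. pose proof (vsum_nonneg a N (g2 a b N) j Ha HN (fun k => g2_nonneg a b N k Ha Hb HN)). lra.
  - left. lra. Qed.

Lemma Vf_nonneg a b N j m : 0 <= a -> 0 < b -> (2 <= N)%nat -> 0 <= m -> 0 <= Vf a b N j m.
Proof. intros. pose proof (pos_INR j). destruct (Vf_ge a b N j m) as [|[]]; auto; lra. Qed.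

Lemma kap_nonneg n v : 0 <= v -> 0 <= kap n v.
Proof. intros Hv. unfold kap. apply Rmin_glb; [lra|]. apply div_nonneg; auto. apply pos_INR. Qed.

Lemma kap_step Q SV V n : 0 < Q -> (1 <= n)%nat -> SV <= Q * (V - 1) ->
  Rmin Q (SV / INR n) <= Q * kap (S n) V.
Proof. intros HQ Hn HS. unfold kap. rewrite S_INR.
  assert (Hn0 : 1 <= INR n) by (apply (le_INR 1); lia).
  destruct (Rle_dec (INR n + 1) V).
  - rewrite (Rmin_left 1 (V / (INR n + 1))).
    { eapply Rle_trans; [apply Rmin_l|]. lra. }
    apply Rmult_le_reg_r with (INR n + 1); [lra|]. unfold Rdiv. rewrite Rmult_assoc, Rinv_l by lra. lra.
  - rewrite (Rmin_right 1 (V / (INR n + 1))).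
    2:{ apply Rmult_le_reg_r with (INR n + 1); [lra|]. unfold Rdiv. rewrite Rmult_assoc, Rinv_l by lra. lra. }
    eapply Rle_trans; [apply Rmin_r|].
    apply Rmult_le_reg_r with (INR n * (INR n + 1)); [nra|].
    replace (SV / INR n * (INR n * (INR n + 1))) with (SV * (INR n + 1)) by (field; lra).
    replace (Q * (V / (INR n + 1)) * (INR n * (INR n + 1))) with (Q * V * INR n) by (field; lra).
    assert (SV * (INR n + 1) <= Q * (V - 1) * (INR n + 1)) by (apply Rmult_le_compat_r; lra).
    nra. Qed.

Lemma VX_ge1 a b N M L xi : 0 <= a -> 0 < b -> (2 <= N)%nat -> Good N M xi -> is_zero L xi = false ->
  1 <= VX a b N M xi /\ exists x, In x (window L) /\ (1 <= xi x)%nat.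
Proof. intros Ha Hb HN G Hz. unfold is_zero in Hz. apply forallb_false in Hz.
  destruct Hz as [x [Hx Hf]]. apply Nat.eqb_neq in Hf. split; [|exists x; split; auto; lia].
  pose proof (mC_nonneg M xi). unfold VX.
  destruct (Z.eq_dec x 0) as [->|Hne].
  - assert (1 <= INR (xi 0%Z)) by (apply (le_INR 1); lia).
    destruct (Vf_ge a b N (xi 0%Z) (mC M xi)) as [|[]]; auto; lra.
  - destruct G as [_ [_ G3]]. assert (Hin : (Z.abs x <= Z.of_nat M)%Z).
    { destruct (Z_le_gt_dec (Z.abs x) (Z.of_nat M)); auto. exfalso; apply Hf, G3; auto. }
    assert (INR (xi x) <= mC M xi).
    { unfold mC. pose proof (rsum_ge_term (fun x => if Z.eq_dec x 0 then 0 else INR (xi x)) (window M) x).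
      simpl in H0. destruct (Z.eq_dec x 0); [contradiction|]. apply H0.
      - intros y _. destruct (Z.eq_dec y 0); [lra|apply pos_INR].
      - apply In_window; lia. }
    assert (1 <= INR (xi x)) by (apply (le_INR 1); lia). pose proof (pos_INR (xi 0%Z)).
    destruct (Vf_ge a b N (xi 0%Z) (mC M xi)) as [|[]]; auto; lra.
Qed.

Lemma hit_S a b N M n L xi : hit_prob a b N M (S n) L xi =
  if is_zero L xi then 1 else
  rsum (fun x =>
          death_rate xi x / rsum (fun x => death_rate xi x + birth_rate a b N M xi x) (window (L + M))
            * hit_prob a b N M n (L + M) (upd xi x (xi x - 1)%nat)
        + birth_rate a b N M xi x / rsum (fun x => death_rate xi x + birth_rate a b N M xi x) (window (L + M))
            * hit_prob a b N M n (L + M) (upd xi x (S (xi x))))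
    (window (L + M)).
Proof. reflexivity. Qed.

Lemma main_bound a b N M : 0 <= a -> 0 < b -> (2 <= N)%nat -> (1 <= M)%nat ->
  forall n L xi, Good N M xi ->
  1 - phiX a b N M xi - kap (S n) (VX a b N M xi) <= hit_prob a b N M (S n) L xi.
Proof. intros Ha Hb HN HM. assert (Hb0 : 0 <= b) by lra.
  assert (Hphi : forall xi, 0 <= phiX a b N M xi).
  { intros; apply phi_nonneg; auto; apply mC_nonneg. }
  assert (HV : forall xi, 0 <= VX a b N M xi).
  { intros; apply Vf_nonneg; auto; apply mC_nonneg. }
  induction n as [|n IH]; intros L xi G.
  - destruct (is_zero L xi) eqn:Hz.
    + simpl. rewrite Hz. pose proof (Hphi xi). pose proof (kap_nonneg 1 _ (HV xi)). lra.
    + pose proof (hit_nonneg a b N M 1 L xi Ha Hb0 HN).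
      destruct (VX_ge1 a b N M L xi Ha Hb HN G Hz) as [HV1 _].
      unfold kap. replace (VX a b N M xi / INR 1) with (VX a b N M xi) by (simpl; field).
      rewrite Rmin_left by lra. pose proof (Hphi xi). lra.
  - destruct (is_zero L xi) eqn:Hz.
    + simpl. rewrite Hz. pose proof (Hphi xi). pose proof (kap_nonneg (S (S n)) _ (HV xi)). lra.
    + destruct (VX_ge1 a b N M L xi Ha Hb HN G Hz) as [HV1 [x0 [Hx0 Hxi0]]].
      rewrite hit_S, Hz.
      set (W := (L + M)%nat).
      set (q := rsum (fun x => death_rate xi x + birth_rate a b N M xi x) (window W)).
      assert (Hq : q = rsum (lq a b N M xi) (window W)).
      { apply rsum_ext. intros x _. apply qx; auto. }
      assert (Hqpos : 0 < q).
      { assert (1 <= death_rate xi x0 + birth_rate a b N M xi x0).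
        { unfold death_rate. pose proof (birth_nonneg a b N M xi x0 Ha Hb0 HN).
          assert (1 <= INR (xi x0)) by (apply (le_INR 1); lia). lra. }
        assert (death_rate xi x0 + birth_rate a b N M xi x0 <= q).
        { apply (rsum_ge_term (fun x => death_rate xi x + birth_rate a b N M xi x)).
          - intros y _. unfold death_rate. pose proof (pos_INR (xi y)).
            pose proof (birth_nonneg a b N M xi y Ha Hb0 HN). lra.
          - apply In_window. apply In_window in Hx0. unfold W. lia. }
        lra. }
      rewrite (rsum_ext _ (fun x => (death_rate xi x * hit_prob a b N M (S n) W (upd xi x (xi x - 1)%nat)
            + birth_rate a b N M xi x * hit_prob a b N M (S n) W (upd xi x (S (xi x)))) / q)).
      2:{ intros x _. field. lra. }
      rewrite rsum_div.
      set (j := xi 0%Z). set (m := mC M xi). set (C := c0 b N M * INR (j * (j - 1))).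
      assert (Gj : (j <= N)%nat) by (destruct G; auto).
      assert (Hm : 0 <= m) by apply mC_nonneg.
      assert (SQ : rsum (lq a b N M xi) (window W) =
                   (INR j + rr a N j) + (1 + C * (INR N - 1)) * m + (C * INR N) * (2 * INR M - m)).
      { unfold lq. apply sum_form. unfold W; lia. }
      assert (SP : rsum (lphi a b N M xi) (window W) =
         (INR j * phi a b N M (j - 1) m + rr a N j * phi a b N M (S j) m)
         + (phi a b N M j (m - 1) + C * (INR N - 1)) * m + (C * INR N * phi a b N M j (m + 1)) * (2 * INR M - m)).
      { unfold lphi. apply sum_form. unfold W; lia. }
      assert (SV : rsum (lV a b N M xi) (window W) =
         (INR j * Vf a b N (j - 1) m + rr a N j * Vf a b N (S j) m)
         + Vf a b N j (m - 1) * m + (C * INR N * Vf a b N j (m + 1)) * (2 * INR M - m)).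
      { unfold lV. apply sum_form. unfold W; lia. }
      pose proof (algPhi a b N M j m Ha Hb HN HM Gj Hm) as APhi. cbv zeta in APhi. fold C in APhi.
      pose proof (algV a b N M j m Ha Hb HN HM Gj Hm) as AV. cbv zeta in AV. fold C in AV.
      set (Q := rsum (lq a b N M xi) (window W)) in *.
      assert (EQ : Q = INR j + rr a N j + m + C * (2 * INR M * INR N - m)) by (rewrite SQ; ring).
      assert (HP : rsum (lphi a b N M xi) (window W) <= Q * phiX a b N M xi).
      { rewrite SP, EQ. unfold phiX. fold j m. lra. }
      assert (HVS : rsum (lV a b N M xi) (window W) <= Q * (VX a b N M xi - 1)).
      { rewrite SV, EQ. unfold VX. fold j m. lra. }
      assert (Hsum : Q - rsum (lphi a b N M xi) (window W)
                       - Rmin Q (rsum (lV a b N M xi) (window W) / INR (S n))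
                     <= rsum (fun x => death_rate xi x * hit_prob a b N M (S n) W (upd xi x (xi x - 1)%nat)
                         + birth_rate a b N M xi x * hit_prob a b N M (S n) W (upd xi x (S (xi x)))) (window W)).
      { eapply Rle_trans.
        2:{ apply rsum_le. intros x _.
            apply (perx a b N M (S n) W xi x Ha Hb HN HM ltac:(lia) G). intros; apply IH; auto. }
        rewrite (rsum_ext (fun x => lq a b N M xi x - lphi a b N M xi x
                   - Rmin (lq a b N M xi x) (lV a b N M xi x / INR (S n)))
                 (fun x => lq a b N M xi x + (-1) * lphi a b N M xi x
                   + (-1) * Rmin (lq a b N M xi x) (lV a b N M xi x / INR (S n)))) by (intros; ring).
        rewrite !rsum_plus, !rsum_scal. fold Q.
        pose proof (rsum_min (lq a b N M xi) (fun x => lV a b N M xi x / INR (S n)) (window W)).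
        rewrite rsum_div in H. fold Q in H. lra. }
      pose proof (kap_step Q (rsum (lV a b N M xi) (window W)) (VX a b N M xi) (S n)
                    ltac:(lra) ltac:(lia) HVS).
      rewrite <- Hq in Hsum, HP, H. 
      apply Rmult_le_reg_r with q; auto.
      unfold Rdiv. rewrite Rmult_assoc, Rinv_l by lra. rewrite Rmult_1_r. nra.
Qed.

Lemma Good_xio N M : Good N M (xi_o N).
Proof. unfold xi_o. split; [|split].
  - destruct (Z.eq_dec 0 0); [lia|congruence].
  - intros x Hx. destruct (Z.eq_dec x 0); [contradiction|lia].
  - intros x Hx. destruct (Z.eq_dec x 0); [lia|reflexivity]. Qed.

Lemma mC_xio N M : mC M (xi_o N) = 0.
Proof. apply rsum_zero. intros x _. unfold xi_o. destruct (Z.eq_dec x 0); [reflexivity|]. simpl; lra. Qed.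

Lemma ext_bound a b N M ext : 0 <= a -> 0 < b -> (2 <= N)%nat -> (1 <= M)%nat ->
  is_lub (extinction_within a b N M) ext ->
  1 - ext <= vsum a N (g1 b N) N / INR M.
Proof. intros Ha Hb HN HM [Hub _].
  set (K := vsum a N (g1 b N) N).
  set (beta := VX a b N M (xi_o N)).
  assert (Hbeta : 0 <= beta) by (apply Vf_nonneg; auto; apply mC_nonneg).
  assert (Hn : forall n, 1 - K / INR M - beta / INR (S n) <= ext).
  { intros n. assert (E : extinction_within a b N M (hit_prob a b N M (S n) 0 (xi_o N))) by (exists (S n); reflexivity).
    pose proof (Hub _ E). pose proof (main_bound a b N M Ha Hb HN HM n 0 (xi_o N) (Good_xio N M)).
    unfold phiX in H0. rewrite mC_xio in H0. unfold phi in H0.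
    assert (Hx0 : xi_o N 0%Z = N) by (unfold xi_o; destruct (Z.eq_dec 0 0); congruence).
    rewrite Hx0 in H0. rewrite (proj2 (Nat.leb_le 2 N) HN) in H0.
    pose proof (kap_leV (S n) beta). fold beta in H0. unfold K.
    replace ((0 * UU b N + vsum a N (g1 b N) N) / INR M) with (vsum a N (g1 b N) N / INR M) in H0 by (unfold Rdiv; ring).
    lra. }
  destruct (Rle_dec (1 - ext) (K / INR M)) as [|Hgt]; auto. exfalso.
  set (d := 1 - ext - K / INR M).
  assert (Hd : 0 < d) by (unfold d; lra).
  destruct (archimed (beta / d)) as [Hup _].
  set (n := Z.to_nat (up (beta / d))).
  assert (Hnn : beta / d < INR (S n)).
  { unfold n. rewrite S_INR. destruct (Z_le_gt_dec 0 (up (beta / d))).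
    - rewrite INR_IZR_INZ, Z2Nat.id by auto. lra.
    - assert (beta / d <= 0). { assert (IZR (up (beta / d)) <= 0) by (apply IZR_le; lia).
        pose proof (archimed (beta / d)). lra. }
      pose proof (pos_INR (Z.to_nat (up (beta / d)))). lra. }
  pose proof (Hn n).
  assert (beta / INR (S n) < d).
  { assert (0 < INR (S n)) by (apply lt_0_INR; lia).
    apply Rmult_lt_reg_r with (INR (S n)); auto. unfold Rdiv at 1. rewrite Rmult_assoc, Rinv_l by lra.
    assert (beta < d * INR (S n)).
    { apply Rmult_lt_reg_r with (/ d). apply Rinv_0_lt_compat; lra.
      replace (d * INR (S n) * / d) with (INR (S n)) by (field; lra). unfold Rdiv in Hnn. lra. }
    lra. }
  unfold d in *. lra.
Qed.

Theorem theorem2p6 (a b : R) (N : nat) :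
  0 <= a -> 0 < b -> (2 <= N)%nat ->
  exists M0 : nat, forall M : nat, (M0 <= M)%nat ->
  forall ext : R, is_lub (extinction_within a b N M) ext ->
    (a < 4 ->
       1 - ext <= Rpower (INR M) (- (1/3)) * (1/2 + b * INR N / (1 - a/4))) /\
    (a = 4 ->
       1 - ext <= Rpower (INR M) (- (1/3)) * (1/2 + (b/2) * (INR N + 2) ^ 2)) /\
    (4 < a ->
       1 - ext <= Rpower (INR M) (- (1/3))
                  * (1/2 + b * / ((a/4 - 1) ^ 2) * (a/4) ^ (N + 2))).
Proof. intros Ha Hb HN.
  set (K := vsum a N (g1 b N) N).
  assert (HK : 0 <= K).
  { apply vsum_nonneg; auto. intros k. unfold g1, UU, Rdiv. pose proof (pos_INR (k * (k-1))). pose proof (pos_INR N).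
    assert (2 <= INR N) by (apply (le_INR 2); lia).
    repeat apply Rmult_le_pos; try lra. apply Rlt_le, Rinv_0_lt_compat; lra. }
  exists (S (Z.to_nat (up ((2 * K) ^ 3)))).
  intros M HM ext Hlub.
  assert (HM1 : (1 <= M)%nat) by lia.
  pose proof (ext_bound a b N M ext Ha Hb HN HM1 Hlub) as Hext. fold K in Hext.
  assert (HMbig : (2 * K) ^ 3 < INR M).
  { destruct (archimed ((2 * K) ^ 3)) as [Hup _].
    assert (INR (S (Z.to_nat (up ((2 * K) ^ 3)))) <= INR M) by (apply le_INR; auto).
    rewrite S_INR in H. destruct (Z_le_gt_dec 0 (up ((2 * K) ^ 3))).
    - rewrite INR_IZR_INZ, Z2Nat.id in H by auto. lra.
    - assert (0 <= (2 * K) ^ 3) by (apply pow_le; lra).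
      assert (IZR (up ((2 * K) ^ 3)) <= 0) by (apply IZR_le; lia). lra. }
  assert (HMpos : 0 < INR M) by (apply lt_0_INR; lia).
  assert (HM1r : 1 <= INR M) by (apply (le_INR 1); lia).
  set (y := Rpower (INR M) (1/3)).
  assert (Hy0 : 0 < y) by (unfold y, Rpower; apply exp_pos).
  assert (Hy3 : y ^ 3 = INR M).
  { unfold y. rewrite <- Rpower_pow by (unfold Rpower; apply exp_pos).
    rewrite Rpower_mult. replace (1 / 3 * INR 3) with 1 by (simpl; field). apply Rpower_1; lra. }
  assert (Hy1 : 1 <= y).
  { destruct (Rle_dec 1 y); auto. assert (y ^ 3 < 1) by (simpl; nra). lra. }
  assert (Hy2K : 2 * K <= y).
  { destruct (Rle_dec (2 * K) y); auto. assert (y ^ 3 < (2 * K) ^ 3).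
    { assert (y < 2 * K) by lra. assert (y * y < (2 * K) * (2 * K)) by nra.
      assert (y * y * y < (2 * K) * (2 * K) * (2 * K)) by nra. simpl. nra. }
    lra. }
  assert (Hinv : Rpower (INR M) (- (1 / 3)) = / y) by (unfold y; apply Rpower_Ropp).
  assert (Hmain : K / INR M <= / y * (1 / 2)).
  { rewrite <- Hy3. apply Rmult_le_reg_r with (2 * y ^ 3). { simpl; nra. }
    replace (K / y ^ 3 * (2 * y ^ 3)) with (2 * K) by (field; lra).
    replace (/ y * (1 / 2) * (2 * y ^ 3)) with (y ^ 2) by (field; lra). simpl. nra. }
  assert (Hiy : 0 < / y) by (apply Rinv_0_lt_compat; lra).
  rewrite Hinv. split; [|split]; intros Hc.
  - assert (0 <= b * INR N / (1 - a / 4)).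
    { apply div_nonneg; [|lra]. pose proof (pos_INR N); nra. }
    assert (/ y * (1/2) <= / y * (1 / 2 + b * INR N / (1 - a / 4))) by (apply Rmult_le_compat_l; lra). lra.
  - assert (0 <= b / 2 * (INR N + 2) ^ 2).
    { pose proof (pos_INR N). apply Rmult_le_pos; [lra|]. apply pow_le; lra. }
    assert (/ y * (1/2) <= / y * (1 / 2 + b / 2 * (INR N + 2) ^ 2)) by (apply Rmult_le_compat_l; lra). lra.
  - assert (0 <= b * / ((a / 4 - 1) ^ 2) * (a / 4) ^ (N + 2)).
    { apply Rmult_le_pos; [apply Rmult_le_pos; [lra|]|apply pow_le; lra].
      apply Rlt_le, Rinv_0_lt_compat. apply pow_lt. lra. }
    assert (/ y * (1/2) <= / y * (1 / 2 + b * / ((a / 4 - 1) ^ 2) * (a / 4) ^ (N + 2))) by (apply Rmult_le_compat_l; lra). lra.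
Qed.
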